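(* Let $Q$ be a symmetric Leibniz algebra, $L$ a dense subalgebra of $Q$, and suppose $Q$ is a multiplicatively semiprime algebra of quotients of $L$. Then for every essential ideal $I$ of $L$, $\mathrm{lan}_{\mathscr{A}(Q)}(\tilde{I})=\{0\}$.
   Context: A symmetric Leibniz algebra satisfies both $[x,[y,z]]=[[x,y],z]-[[x,z],y]$ and $[x,[y,z]]=[[x,y],z]+[y,[x,z]]$. For $x\in Q$, $R_x(u)=[u,x]$, $L_x(u)=[x,u]$. $\mathscr{A}(Q)$ is the associative subalgebra of $\mathrm{End}(Q)$ generated by all $R_x,L_x$; for $X\subseteq Q$, $\mathscr{A}_Q(X)$ is the subalgebra of $\mathscr{A}(Q)$ generated by $R_x,L_x$, $x\in X$. For an ideal $I$ of $L$, $\tilde I$ is the two-sided ideal of $\mathscr{A}_Q(L)$ generated by $\mathscr{A}_Q(I)$, and $\mathrm{lan}_{\mathscr{A}(Q)}(\tilde I)=\{\mu\in\mathscr{A}(Q):\mu\nu=0\ \forall\nu\in\tilde I\}$. $M(Q)$ is the associative algebra generated by the identity and all $R_x,L_x$; $L$ is dense in $Q$ if the only $\mu\in M(Q)$ with $\mu(L)=\{0\}$ is $0$. $Q$ is multiplicatively semiprime if $Q$ is semiprime ($[J,J]\ne0$ for nonzero ideals $J$) and $M(Q)$ is semiprime (no nonzero ideal of zero square). An ideal of $L$ is essential if it meets every nonzero ideal nontrivially. With ${}_L(q)=\mathbb{F}q+\{\sum\xi_i(q):\xi_i\in\mathscr{A}_Q(L)\}$ and $(L:q)=\{x\in L:[x,{}_L(q)]\subseteq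 L,[{}_L(q),x]\subseteq L\}$, $Q$ is an algebra of quotients of $L$ if for all $p,q\in Q$, $p\ne0$, there is $x\in(L:q)$ with $[x,p]\ne0$ or $y\in(L:q)$ with $[p,y]\ne0$. *)

(* Defs.v *)
From HB Require Import structures.
From mathcomp Require Import all_boot all_algebra.
Set Implicit Arguments. Unset Strict Implicit. Unset Printing Implicit Defensive.
Import GRing.Theory.
Local Open Scope ring_scope.

Section LeibnizDefs.
Variables (F : fieldType) (V : lmodType F).

Definition bilinear_br (br : V -> V -> V) : Prop :=
  (forall a x y z, br (a *: x + y) z = a *: br x z + br y z) /\
  (forall a x y z, br z (a *: x + y) = a *: br z x + br z y).

Definition symmetric_leibniz (br : V -> V -> V) : Prop :=
  bilinear_br br /\
  (forall x y z, br x (br y z) = br (br x y) z - br (br x z) y) /\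
  (forall x y z, br x (br y z) = br (br x y) z + br y (br x z)).

Definition Rop (br : V -> V -> V) (x : V) : V -> V := fun u => br u x.
Definition Lop (br : V -> V -> V) (x : V) : V -> V := fun u => br x u.

Definition zero_map : V -> V := fun _ => 0.

Definition subspace (P : V -> Prop) : Prop :=
  P 0 /\ forall a x y, P x -> P y -> P (a *: x + y).

Definition subalgebra (br : V -> V -> V) (L : V -> Prop) : Prop :=
  subspace L /\ forall x y, L x -> L y -> L (br x y).

Definition ideal_of (br : V -> V -> V) (L I : V -> Prop) : Prop :=
  subspace I /\ (forall x, I x -> L x) /\
  (forall x y, L x -> I y -> I (br x y)) /\
  (forall x y, I x -> L y -> I (br x y)).

Definition nonzero_set (P : V -> Prop) : Prop := exists x, P x /\ x <> 0.

Definition essential_ideal (br : V -> V -> V) (L I : V -> Prop) : Prop :=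
  ideal_of br L I /\
  forall J, ideal_of br L J -> nonzero_set J -> exists x, I x /\ J x /\ x <> 0.

Inductive gen_alg (G : (V -> V) -> Prop) : (V -> V) -> Prop :=
  | ga_gen f : G f -> gen_alg G f
  | ga_zero : gen_alg G zero_map
  | ga_add f g : gen_alg G f -> gen_alg G g -> gen_alg G (fun u => f u + g u)
  | ga_scale a f : gen_alg G f -> gen_alg G (fun u => a *: f u)
  | ga_comp f g : gen_alg G f -> gen_alg G g -> gen_alg G (fun u => f (g u)).

Inductive gen_ualg (G : (V -> V) -> Prop) : (V -> V) -> Prop :=
  | gu_gen f : G f -> gen_ualg G f
  | gu_id : gen_ualg G (fun u => u)
  | gu_zero : gen_ualg G zero_map
  | gu_add f g : gen_ualg G f -> gen_ualg G g -> gen_ualg G (fun u => f u + g u)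
  | gu_scale a f : gen_ualg G f -> gen_ualg G (fun u => a *: f u)
  | gu_comp f g : gen_ualg G f -> gen_ualg G g -> gen_ualg G (fun u => f (g u)).

Definition mult_gens (br : V -> V -> V) (X : V -> Prop) (f : V -> V) : Prop :=
  exists x, X x /\ (f = Rop br x \/ f = Lop br x).

Definition AQ (br : V -> V -> V) (X : V -> Prop) : (V -> V) -> Prop :=
  gen_alg (mult_gens br X).
Definition AofQ (br : V -> V -> V) : (V -> V) -> Prop := AQ br (fun _ => True).

Definition MofQ (br : V -> V -> V) : (V -> V) -> Prop :=
  gen_ualg (mult_gens br (fun _ => True)).

Inductive tilde_ideal (br : V -> V -> V) (L I : V -> Prop) : (V -> V) -> Prop :=
  | ti_gen f : AQ br I f -> tilde_ideal br L I f
  | ti_zero : tilde_ideal br L I zero_map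
  | ti_add f g : tilde_ideal br L I f -> tilde_ideal br L I g ->
      tilde_ideal br L I (fun u => f u + g u)
  | ti_scale a f : tilde_ideal br L I f -> tilde_ideal br L I (fun u => a *: f u)
  | ti_lmul m f : AQ br L m -> tilde_ideal br L I f ->
      tilde_ideal br L I (fun u => m (f u))
  | ti_rmul f m : tilde_ideal br L I f -> AQ br L m ->
      tilde_ideal br L I (fun u => f (m u)).

Definition lan (br : V -> V -> V) (L I : V -> Prop) (mu : V -> V) : Prop :=
  AofQ br mu /\ forall nu, tilde_ideal br L I nu -> forall u, mu (nu u) = 0.

Definition dense (br : V -> V -> V) (L : V -> Prop) : Prop :=
  forall mu, MofQ br mu -> (forall x, L x -> mu x = 0) -> mu = zero_map.

Definition semiprime (br : V -> V -> V) : Prop :=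
  forall J, ideal_of br (fun _ => True) J -> nonzero_set J ->
    exists x y, J x /\ J y /\ br x y <> 0.

Definition MQ_ideal (br : V -> V -> V) (K : (V -> V) -> Prop) : Prop :=
  (forall k, K k -> MofQ br k) /\ K zero_map /\
  (forall f g, K f -> K g -> K (fun u => f u + g u)) /\
  (forall a f, K f -> K (fun u => a *: f u)) /\
  (forall m k, MofQ br m -> K k -> K (fun u => m (k u))) /\
  (forall k m, K k -> MofQ br m -> K (fun u => k (m u))).

Definition MQ_semiprime (br : V -> V -> V) : Prop :=
  forall K, MQ_ideal br K ->
    (forall f g, K f -> K g -> forall u, f (g u) = 0) ->
    forall k, K k -> k = zero_map.

Definition mult_semiprime (br : V -> V -> V) : Prop :=
  semiprime br /\ MQ_semiprime br.

Definition Lq (br : V -> V -> V) (L : V -> Prop) (q u : V) : Prop :=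
  exists (a : F) (n : nat) (xi : nat -> V -> V), (forall i, (i < n)%N -> AQ br L (xi i)) /\
    u = a *: q + \sum_(i < n) xi i q.

Definition Lcolon (br : V -> V -> V) (L : V -> Prop) (q x : V) : Prop :=
  L x /\ forall u, Lq br L q u -> L (br x u) /\ L (br u x).

Definition algebra_of_quotients (br : V -> V -> V) (L : V -> Prop) : Prop :=
  forall p q, p <> 0 ->
    (exists x, Lcolon br L q x /\ br x p <> 0) \/
    (exists y, Lcolon br L q y /\ br p y <> 0).

End LeibnizDefs.
Arguments zero_map {F V} _.

(* Main.v *)
Require Import Defs.
From mathcomp Require Import all_boot all_algebra.
From Stdlib Require Import Classical FunctionalExtensionality.
Import GRing.Theory.
Local Open Scope ring_scope.
Set Implicit Arguments.
Unset Strict Implicit.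

Section Aux.
Variables (F : fieldType) (V : lmodType F) (br : V -> V -> V).
Hypothesis Hbil : bilinear_br br.

Lemma brDZl a x y z : br (a *: x + y) z = a *: br x z + br y z.
Proof. by case: Hbil. Qed.
Lemma brDZr a x y z : br z (a *: x + y) = a *: br z x + br z y.
Proof. by case: Hbil. Qed.
Lemma br0l z : br 0 z = 0.
Proof. have H := brDZl (-1) 0 0 z. by rewrite scaler0 addr0 scaleN1r addNr in H. Qed.
Lemma br0r z : br z 0 = 0.
Proof. have H := brDZr (-1) 0 0 z. by rewrite scaler0 addr0 scaleN1r addNr in H. Qed.
Lemma brZr z a x : br z (a *: x) = a *: br z x.
Proof. have H := brDZr a x 0 z. by rewrite addr0 br0r addr0 in H. Qed.
Lemma brZl z a x : br (a *: x) z = a *: br x z.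
Proof. have H := brDZl a x 0 z. by rewrite addr0 br0l addr0 in H. Qed.

Definition linF (f : V -> V) := forall a x y, f (a *: x + y) = a *: f x + f y.

Lemma M_lin f : gen_ualg (mult_gens br (fun _ => True)) f -> linF f.
Proof.
elim=> {f}.
- move=> f [x [_ [->|->]]] a u w; rewrite /Rop /Lop.
  + exact: brDZl.
  + exact: brDZr.
- by [].
- by move=> a x y; rewrite /zero_map scaler0 addr0.
- move=> f g _ Hf _ Hg a x y /=. by rewrite Hf Hg scalerDr addrACA.
- move=> b f _ Hf a x y /=. by rewrite Hf scalerDr !scalerA mulrC.
- move=> f g _ Hf _ Hg a x y /=. by rewrite Hg Hf.
Qed.

Lemma M0 f : MofQ br f -> f 0 = 0.
Proof. move=> Hf; have H := M_lin Hf (-1) 0 0. by rewrite scaler0 addr0 scaleN1r addNr in H. Qed.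

Lemma A_M (G : (V -> V) -> Prop) f : gen_alg G f -> gen_ualg G f.
Proof.
elim=> {f}.
- by move=> f Hf; apply: gu_gen.
- exact: gu_zero.
- by move=> f g _ Hf _ Hg; apply: gu_add.
- by move=> a f _ Hf; apply: gu_scale.
- by move=> f g _ Hf _ Hg; apply: gu_comp.
Qed.

Lemma AQ_mono (X Y : V -> Prop) f : (forall x, X x -> Y x) -> AQ br X f -> AQ br Y f.
Proof.
move=> HXY; elim=> {f}.
- move=> f [x [Hx Hf]]; apply: ga_gen; exists x; split=> //; exact: HXY.
- exact: ga_zero.
- by move=> f g _ Hf _ Hg; apply: ga_add.
- by move=> a f _ Hf; apply: ga_scale.
- by move=> f g _ Hf _ Hg; apply: ga_comp.
Qed.

Lemma M_A_comp m : MofQ br m -> forall mu, AofQ br mu -> AofQ br (fun u => m (mu u)).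
Proof.
elim=> {m}.
- move=> f Hf mu Hmu; apply: ga_comp => //; exact: ga_gen.
- by move=> mu Hmu.
- move=> mu _; exact: ga_zero.
- move=> f g _ Hf _ Hg mu Hmu; exact: (ga_add (Hf _ Hmu) (Hg _ Hmu)).
- move=> a f _ Hf mu Hmu; exact: (ga_scale a (Hf _ Hmu)).
- move=> f g _ Hf _ Hg mu Hmu; exact: (Hf _ (Hg _ Hmu)).
Qed.

End Aux.

Section Main.
Variables (F : fieldType) (V : lmodType F) (br : V -> V -> V) (L I : V -> Prop).
Hypothesis Hsl : symmetric_leibniz br.
Hypothesis Hsub : subalgebra br L.
Hypothesis Hdense : dense br L.
Hypothesis Hms : mult_semiprime br.
Hypothesis HI : essential_ideal br L I.
Hypothesis Haoq : algebra_of_quotients br L.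

Let Hbil : bilinear_br br := proj1 Hsl.

Definition Lam mu := lan br L I mu.
Definition T0 v := forall mu, Lam mu -> mu v = 0.

Lemma lam_M mu : Lam mu -> MofQ br mu.
Proof. by case=> H _; apply: A_M. Qed.

Lemma lam_left m mu : MofQ br m -> Lam mu -> Lam (fun u => m (mu u)).
Proof.
move=> Hm [Hmu1 Hmu2]; split; first exact: M_A_comp.
move=> nu Hnu u /=; rewrite (Hmu2 nu Hnu u); exact: (M0 Hbil Hm).
Qed.

Lemma lam_right a mu : AQ br L a -> Lam mu -> Lam (fun u => mu (a u)).
Proof.
move=> Ha [Hmu1 Hmu2]; split.
  apply: ga_comp => //; apply: (AQ_mono _ Ha) => //.
move=> nu Hnu u; exact: (Hmu2 _ (ti_lmul Ha Hnu) u).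
Qed.

Lemma T0_tilde nu u : tilde_ideal br L I nu -> T0 (nu u).
Proof. move=> Hnu mu [_ H]; exact: H. Qed.

Lemma T0_0 : T0 0.
Proof. move=> mu Hmu; exact: (M0 Hbil (lam_M Hmu)). Qed.

Lemma T0_lin a x y : T0 x -> T0 y -> T0 (a *: x + y).
Proof.
move=> Hx Hy mu Hmu; rewrite (M_lin Hbil (lam_M Hmu)) Hx // Hy //.
by rewrite scaler0 addr0.
Qed.

Lemma F3R mu w : Lam mu -> T0 w -> (fun u => mu (Rop br w u)) = zero_map.
Proof.
move=> Hmu Hw; apply: Hdense.
  apply: gu_comp; first exact: lam_M.
  apply: gu_gen; exists w; split=> //; by left.
move=> x Hx /=.
change (mu (br x w)) with ((fun u => mu (Lop br x u)) w).
apply: (Hw (fun u => mu (Lop br x u))); apply: lam_right => //.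
apply: ga_gen; exists x; split=> //; by right.
Qed.

Lemma F3L mu w : Lam mu -> T0 w -> (fun u => mu (Lop br w u)) = zero_map.
Proof.
move=> Hmu Hw; apply: Hdense.
  apply: gu_comp; first exact: lam_M.
  apply: gu_gen; exists w; split=> //; by right.
move=> x Hx /=.
change (mu (br w x)) with ((fun u => mu (Rop br x u)) w).
apply: (Hw (fun u => mu (Rop br x u))); apply: lam_right => //.
apply: ga_gen; exists x; split=> //; by left.
Qed.

Lemma T0_R z w : T0 w -> T0 (br w z).
Proof.
move=> Hw mu Hmu; have := F3L Hmu Hw.
move/(congr1 (fun f => f z)) => /= H; exact: H.
Qed.

Lemma T0_L z w : T0 w -> T0 (br z w).
Proof.
move=> Hw mu Hmu; have := F3R Hmu Hw.
move/(congr1 (fun f => f z)) => /= H; exact: H.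
Qed.

Lemma T0_M m : MofQ br m -> forall w, T0 w -> T0 (m w).
Proof.
elim=> {m}.
- move=> f [x [_ [->|->]]] w Hw; rewrite /Rop /Lop; [exact: T0_R | exact: T0_L].
- by [].
- move=> w _; exact: T0_0.
- move=> f g _ Hf _ Hg w Hw /=.
  have := T0_lin 1 (Hf _ Hw) (Hg _ Hw); by rewrite scale1r.
- move=> a f _ Hf w Hw /=.
  have := T0_lin a (Hf _ Hw) T0_0; by rewrite addr0.
- move=> f g _ Hf _ Hg w Hw /=; exact: Hf (Hg _ Hw).
Qed.

Lemma Slemma f :
  MofQ br f -> (forall u, T0 (f u)) -> (forall s, T0 s -> f s = 0) -> f = zero_map.
Proof.
move=> Hf H1 H2.
pose K := fun k => MofQ br k /\ (forall u, T0 (k u)) /\ (forall s, T0 s -> k s = 0).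
apply: ((proj2 Hms) K _ _ f); last by split.
- split; first by move=> k [].
  split; first by split; [exact: gu_zero | split=> // u; exact: T0_0].
  split.
    move=> g h [Hg1 [Hg2 Hg3]] [Hh1 [Hh2 Hh3]]; split; first exact: gu_add.
    split.
      move=> u; have := T0_lin 1 (Hg2 u) (Hh2 u); by rewrite scale1r.
    by move=> s Hs; rewrite Hg3 // Hh3 // addr0.
  split.
    move=> a g [Hg1 [Hg2 Hg3]]; split; first exact: gu_scale.
    split.
      move=> u; have := T0_lin a (Hg2 u) T0_0; by rewrite addr0.
    by move=> s Hs; rewrite Hg3 // scaler0.
  split.
    move=> m k Hm [Hk1 [Hk2 Hk3]]; split; first exact: gu_comp.
    split.
      move=> u; exact: T0_M.
    by move=> s Hs /=; rewrite Hk3 //; exact: (M0 Hbil Hm).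
  move=> k m [Hk1 [Hk2 Hk3]] Hm; split; first exact: gu_comp.
  split=> //.
  by move=> s Hs /=; rewrite Hk3 //; exact: T0_M.
- move=> g h [_ [_ Hg]] [_ [Hh _]] u; exact: Hg _ (Hh u).
Qed.

Definition Ann p := forall s, T0 s -> br s p = 0 /\ br p s = 0.

Lemma ann_lam mu u : Lam mu -> Ann (mu u).
Proof.
move=> Hmu s Hs; split.
- suff E : (fun u => Lop br s (mu u)) = zero_map.
    by have := congr1 (fun f => f u) E.
  apply: Slemma.
  + apply: gu_comp; last exact: lam_M.
    apply: gu_gen; exists s; split=> //; by right.
  + move=> v; exact: T0_R.
  + move=> t Ht; rewrite /Lop (Ht mu Hmu); exact: (br0r Hbil).
- suff E : (fun u => Rop br s (mu u)) = zero_map.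
    by have := congr1 (fun f => f u) E.
  apply: Slemma.
  + apply: gu_comp; last exact: lam_M.
    apply: gu_gen; exists s; split=> //; by left.
  + move=> v; exact: T0_L.
  + move=> t Ht; rewrite /Rop (Ht mu Hmu); exact: (br0l Hbil).
Qed.

Definition Hset p := L p /\ Ann p.

Lemma H_ideal : ideal_of br L Hset.
Proof.
have [_ [Hl1 Hl2]] := Hsl.
have [[HL0 HLlin] HLbr] := Hsub.
have Ann_lr : forall z v, Ann v -> Ann (br z v) /\ Ann (br v z).
  move=> z v Hv; split=> s Hs; split.
  - have E := Hl2 s z v; rewrite (proj1 (Hv _ (T0_R z Hs))) (proj1 (Hv _ Hs)) (br0r Hbil) add0r in E.
    exact E.
  - have E := Hl1 z v s; rewrite (proj2 (Hv _ Hs)) (br0r Hbil) (proj1 (Hv _ (T0_L z Hs))) subr0 in E.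
    by rewrite -E.
  - have E := Hl2 s v z; rewrite (proj1 (Hv _ Hs)) (br0l Hbil) (proj2 (Hv _ (T0_R z Hs))) add0r in E.
    exact E.
  - have E := Hl1 v z s; rewrite (proj2 (Hv _ (T0_L z Hs))) (proj2 (Hv _ Hs)) (br0l Hbil) subr0 in E.
    by rewrite -E.
split.
  split.
    split=> // s Hs; by rewrite (br0l Hbil) (br0r Hbil).
  move=> a x y [Hx1 Hx2] [Hy1 Hy2]; split; first exact: HLlin.
  move=> s Hs; rewrite (brDZl Hbil) (brDZr Hbil).
  by rewrite (proj1 (Hx2 _ Hs)) (proj2 (Hx2 _ Hs)) (proj1 (Hy2 _ Hs)) (proj2 (Hy2 _ Hs)) scaler0 addr0.
split; first by move=> x [].
split.
  move=> x y Hx [Hy1 Hy2]; split; first exact: HLbr.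
  exact: (proj1 (Ann_lr x y Hy2)).
move=> x y [Hx1 Hx2] Hy; split; first exact: HLbr.
exact: (proj2 (Ann_lr y x Hx2)).
Qed.

Lemma main_lam mu : Lam mu -> mu = zero_map.
Proof.
move=> Hmu.
case: (classic (exists u, mu u <> 0)); last first.
  move=> Hn; apply: functional_extensionality => u.
  apply: NNPP => Hu; apply: Hn; by exists u.
move=> [u Hu].
suff [p1 [Hp1 Hp1n]] : exists p1, Hset p1 /\ p1 <> 0.
  have [v [Iv [Hv Hvn]]] := proj2 HI Hset H_ideal (ex_intro _ p1 (conj Hp1 Hp1n)).
  have HR : Rop br v = zero_map.
    apply: Slemma.
    - apply: gu_gen; exists v; split=> //; by left.
    - move=> w; apply: T0_tilde; apply: ti_gen; apply: ga_gen.
      exists v; split=> //; by left.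
    - move=> s Hs; exact: (proj1 (proj2 Hv _ Hs)).
  have HL : Lop br v = zero_map.
    apply: Slemma.
    - apply: gu_gen; exists v; split=> //; by right.
    - move=> w; apply: T0_tilde; apply: ti_gen; apply: ga_gen.
      exists v; split=> //; by right.
    - move=> s Hs; exact: (proj2 (proj2 Hv _ Hs)).
  have Rv w : br w v = 0 by have := congr1 (fun f => f w) HR.
  have Lv w : br v w = 0 by have := congr1 (fun f => f w) HL.
  pose J := fun w => exists c : F, w = c *: v.
  have HJ : ideal_of br (fun _ => True) J.
    split.
      split; first by exists 0; rewrite scale0r.
      move=> a x y [c ->] [d ->]; exists (a * c + d).
      by rewrite scalerDl scalerA.
    split=> //.
    split.
      move=> x y _ [d ->]; exists 0; by rewrite (brZr Hbil) Rv scaler0 scale0r.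
    move=> x y [c ->] _; exists 0; by rewrite (brZl Hbil) Lv scaler0 scale0r.
  have [x [y [[c ->] [[d ->] Hxy]]]] := proj1 Hms J HJ (ex_intro _ v (conj (ex_intro _ 1 (esym (scale1r v))) Hvn)).
  by exfalso; apply: Hxy; rewrite (brZr Hbil) Rv scaler0.
have HLq : Lq br L (mu u) (mu u).
  exists 1, 0%N, (fun _ => zero_map); split; first by move=> i; rewrite ltn0.
  by rewrite big_ord0 scale1r addr0.
case: (Haoq (mu u) Hu) => [[x [[HxL Hcol] Hxp]] | [y [[HyL Hcol] Hyp]]].
- exists (br x (mu u)); split=> //; split; first exact: (proj1 (Hcol _ HLq)).
  have HM : MofQ br (Lop br x) by apply: gu_gen; exists x; split=> //; by right.
  exact: (ann_lam u (lam_left HM Hmu)).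
- exists (br (mu u) y); split=> //; split; first exact: (proj2 (Hcol _ HLq)).
  have HM : MofQ br (Rop br y) by apply: gu_gen; exists y; split=> //; by left.
  exact: (ann_lam u (lam_left HM Hmu)).
Qed.

End Main.

Unset Implicit Arguments.

Theorem corollary6p7 (F : fieldType) (V : lmodType F) (br : V -> V -> V)
  (L : V -> Prop) :
  symmetric_leibniz br ->
  subalgebra br L ->
  dense br L ->
  mult_semiprime br ->
  algebra_of_quotients br L ->
  forall I : V -> Prop, essential_ideal br L I ->
  forall mu : V -> V, lan br L I mu -> mu = zero_map.
Proof.
move=> Hsl Hsub Hd Hms Haoq I HI mu Hmu.
exact: (main_lam Hsl Hsub Hd Hms HI Haoq Hmu).
Qed.
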